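(* (i) For every packing 4-coloring $f$ of $S^2_{P_6}$, $f(22)\notin\{2,3\}$. (ii) For every packing 4-coloring $f'$ of $S^2_{P_8}$, the vertices $33$ and $44$ do not both receive color $1$, i.e. it is not the case that $f'(33)=f'(44)=1$.
   Context: $P_k$ is the path with vertex set $[k]=\{0,\dots,k-1\}$ and edges $\{i,i+1\}$, $0\le i\le k-2$. For a graph $G$ with vertex set $[k]$, the generalized Sierpi\'nski graph $S^2_G$ has vertex set $[k]^2$ (words $ab$, written e.g. $22$ for $a=b=2$), where $ab$ and $cd$ are adjacent iff either $a=c$ and $bd\in E(G)$, or $a\neq c$, $ac\in E(G)$, $b=c$ and $d=a$. A packing $c$-coloring of a graph $X$ is a map $f:V(X)\to\{1,\dots,c\}$ such that any two distinct vertices $u,v$ with $f(u)=f(v)=i$ satisfy $d_X(u,v)>i$. *)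

(* Defs.v *)
From mathcomp Require Import all_boot.
Set Implicit Arguments. Unset Strict Implicit. Unset Printing Implicit Defensive.

Definition path_adj (k : nat) : rel 'I_k :=
  fun i j => (i.+1 == j :> nat) || (j.+1 == i :> nat).

(* Generalized Sierpinski graph S^2_G on [k]^2, for a graph G given by adjacency
   relation adjG on 'I_k. Word ab is the pair (a,b). *)
Definition sierp2_adj (k : nat) (adjG : rel 'I_k) : rel ('I_k * 'I_k) :=
  fun u v =>
    let: (a, b) := u in let: (c, d) := v in
    ((a == c) && adjG b d) || [&& a != c, adjG a c, b == c & d == a].

Fixpoint reach (T : finType) (e : rel T) (n : nat) (u v : T) : bool :=
  if n is n'.+1 then (u == v) || [exists w, e u w && reach e n' w v]
  else u == v.

Definition dist_gt (T : finType) (e : rel T) (u v : T) (i : nat) : Prop :=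
  ~~ reach e i u v.

Definition packing_coloring (T : finType) (e : rel T) (c : nat) (f : T -> nat) : Prop :=
  (forall v, 1 <= f v <= c) /\
  (forall u v, u != v -> f u = f v -> dist_gt e u v (f u)).

Definition S2P (k : nat) := sierp2_adj (@path_adj k).

(* The vertex "ab" of S^2_{P_(k+1)} (a, b <= k). *)
Definition vtx (k a b : nat) : 'I_k.+1 * 'I_k.+1 := (inord a, inord b).
Arguments S2P k : clear implicits.

(* Main.v *)
Require Import Defs.
From mathcomp Require Import all_boot zify.
Set Implicit Arguments. Unset Strict Implicit. Unset Printing Implicit Defensive.

Lemma reach_refl (T : finType) (e : rel T) m u : reach e m u u.
Proof. by case: m => [|m] /=; rewrite eqxx. Qed.

Lemma reach_mono (T : finType) (e : rel T) n m u v :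
  n <= m -> reach e n u v -> reach e m u v.
Proof.
elim: n m u => [|n IH] m u /=.
  by move=> _ /eqP ->; apply: reach_refl.
case: m => [|m] //= Hnm /orP [->//|/existsP [w /andP [Huw Hw]]].
apply/orP; right; apply/existsP; exists w; rewrite Huw /=.
exact: IH Hw.
Qed.

Definition conflict (tab : seq (nat * nat * nat)) i j c :=
  has (fun t => (t.1.1 == i) && (t.1.2 == j) && (t.2 <= c)) tab.

Fixpoint hasf (A : Type) (p : A -> bool) (s : seq A) : bool :=
  match s with [::] => false | x :: s' => if p x then true else hasf p s' end.

Lemma hasfE (A : Type) (p : A -> bool) s : hasf p s = has p s.
Proof. by elim: s => //= x s ->; case: (p x). Qed.

Fixpoint srch tab (ds : seq (seq nat)) (pre : seq nat) : bool :=
  match ds with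
  | [::] => true
  | D :: ds' => hasf (fun c => if all (fun i => ~~ ((nth 0 pre i == c) && conflict tab i (size pre) c))
                                   (iota 0 (size pre)) then srch tab ds' (rcons pre c) else false) D
  end.

Lemma srch_sound tab (g : nat -> nat) ds m :
  (forall i, m <= i < m + size ds -> g i \in nth [::] ds (i - m)) ->
  (forall i j, i < j < m + size ds -> conflict tab i j (g i) -> g i != g j) ->
  srch tab ds (map g (iota 0 m)).
Proof.
elim: ds m => [|D ds IH] m //= Hd Hc.
rewrite hasfE.
apply/hasP; exists (g m).
  by have := Hd m; rewrite subnn; apply; rewrite leqnn addnS ltnS leq_addr.
rewrite size_map size_iota; apply/andP; split.
  apply/allP => i; rewrite mem_iota add0n => Him.
  rewrite (nth_map 0) ?size_iota // nth_iota // add0n.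
  apply/negP => /andP [/eqP Hgi Hcf].
  have Hcond : i < m < m + (size ds).+1.
    by rewrite (andP Him).2 addnS ltnS leq_addr.
  by move: (Hc i m Hcond); rewrite Hgi => /(_ Hcf); rewrite eqxx.
have -> : rcons (map g (iota 0 m)) (g m) = map g (iota 0 m.+1).
  by rewrite -addn1 iotaD map_cat /= cats1.
apply: IH.
  move=> i /andP [Hi1 Hi2]; have := Hd i.
  rewrite (ltnW Hi1) addnS -addSn Hi2 => /(_ isT).
  by rewrite -(subnSK Hi1).
by move=> i j Hij; apply: Hc; rewrite addnS -addSn.
Qed.

Lemma path_reach (T : finType) (e : rel T) u p d :
  path e u p -> size p <= d -> reach e d u (last u p).
Proof.
elim: p u d => [|x p IH] u d /=; first by move=> _ _; apply: reach_refl.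
case: d => [|d] // /andP [Hux Hp] Hs /=.
apply/orP; right; apply/existsP; exists x; rewrite Hux /=.
exact: IH.
Qed.

Definition tab_ok (T : finType) (e : rel T) (x0 : T) (W : seq T) (pt : seq (nat*nat*seq T)) :=
  all (fun t => [&& path e (nth x0 W t.1.1) t.2,
                    last (nth x0 W t.1.1) t.2 == nth x0 W t.1.2
                  & nth x0 W t.1.1 != nth x0 W t.1.2]) pt.

Definition dtab (T : Type) (pt : seq (nat*nat*seq T)) :=
  map (fun t => (t.1.1, t.1.2, size t.2)) pt.

Lemma no_coloring (T : finType) (e : rel T) (f : T -> nat) x0 W pt ds :
  packing_coloring e 4 f -> tab_ok e x0 W pt ->
  (forall i, i < size ds -> f (nth x0 W i) \in nth [::] ds i) ->
  srch (dtab pt) ds [::] = false -> False.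
Proof.
move=> [_ Hp] /allP Hok Hd.
have := @srch_sound (dtab pt) (fun i => f (nth x0 W i)) ds 0.
rewrite /= => H Hf; rewrite Hf in H; suff : false by []; apply: H.
  by move=> i; rewrite subn0 add0n; apply: Hd.
move=> i j _ /hasP [t /mapP [t' Ht' ->] /andP [/andP [/eqP Hi /eqP Hj] Hle]].
apply/eqP => Heq.
have /and3P [Hpa /eqP Hl Hne] := Hok t' Ht'.
rewrite /= in Hi Hj Hle; rewrite Hi Hj in Hpa Hl Hne.
have := Hp _ _ Hne Heq; rewrite /dist_gt => /negP; apply.
rewrite -Hl; exact: path_reach Hpa Hle.
Qed.

Lemma dom4 (T : finType) (e : rel T) (f : T -> nat) v :
  packing_coloring e 4 f -> f v \in [:: 1; 2; 3; 4].
Proof.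
move=> [H _]; have := H v; case: (f v) => [|[|[|[|[|n]]]]] //.
Qed.

Lemma dom_ext (T : finType) (e : rel T) (f : T -> nat) x0 W ds n :
  packing_coloring e 4 f ->
  (forall i, i < size ds -> f (nth x0 W i) \in nth [::] ds i) ->
  (forall i, i < size (ds ++ nseq n [:: 1; 2; 3; 4]) ->
     f (nth x0 W i) \in nth [::] (ds ++ nseq n [:: 1; 2; 3; 4]) i).
Proof.
move=> Hp Hd i; rewrite nth_cat size_cat size_nseq.
case: (ltnP i (size ds)) => Hi; first by move=> _; exact: Hd i Hi.
move=> Hi2; rewrite nth_nseq ifT; first exact: dom4 Hp.
lia.
Qed.

Lemma vtxE k a b (Ha : a < k.+1) (Hb : b < k.+1) : vtx k a b = (Ordinal Ha, Ordinal Hb).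
Proof. by rewrite /vtx; congr pair; apply: val_inj; rewrite /= inordK. Qed.

Definition W1 : seq ('I_6 * 'I_6) := [:: (@Ordinal 6 2 isT, @Ordinal 6 2 isT); (@Ordinal 6 2 isT, @Ordinal 6 1 isT); (@Ordinal 6 2 isT, @Ordinal 6 3 isT); (@Ordinal 6 1 isT, @Ordinal 6 2 isT); (@Ordinal 6 2 isT, @Ordinal 6 0 isT); (@Ordinal 6 2 isT, @Ordinal 6 4 isT); (@Ordinal 6 3 isT, @Ordinal 6 2 isT); (@Ordinal 6 1 isT, @Ordinal 6 1 isT); (@Ordinal 6 1 isT, @Ordinal 6 3 isT); (@Ordinal 6 2 isT, @Ordinal 6 5 isT); (@Ordinal 6 3 isT, @Ordinal 6 1 isT); (@Ordinal 6 3 isT, @Ordinal 6 3 isT)].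
Definition T1 : seq (nat*nat*seq ('I_6 * 'I_6)) := [:: (0,1,[:: (@Ordinal 6 2 isT, @Ordinal 6 1 isT)]);
 (0,2,[:: (@Ordinal 6 2 isT, @Ordinal 6 3 isT)]);
 (0,3,[:: (@Ordinal 6 2 isT, @Ordinal 6 1 isT); (@Ordinal 6 1 isT, @Ordinal 6 2 isT)]);
 (0,4,[:: (@Ordinal 6 2 isT, @Ordinal 6 1 isT); (@Ordinal 6 2 isT, @Ordinal 6 0 isT)]);
 (0,5,[:: (@Ordinal 6 2 isT, @Ordinal 6 3 isT); (@Ordinal 6 2 isT, @Ordinal 6 4 isT)]);
 (0,6,[:: (@Ordinal 6 2 isT, @Ordinal 6 3 isT); (@Ordinal 6 3 isT, @Ordinal 6 2 isT)]);
 (0,7,[:: (@Ordinal 6 2 isT, @Ordinal 6 1 isT); (@Ordinal 6 1 isT, @Ordinal 6 2 isT); (@Ordinal 6 1 isT, @Ordinal 6 1 isT)]);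
 (0,8,[:: (@Ordinal 6 2 isT, @Ordinal 6 1 isT); (@Ordinal 6 1 isT, @Ordinal 6 2 isT); (@Ordinal 6 1 isT, @Ordinal 6 3 isT)]);
 (0,9,[:: (@Ordinal 6 2 isT, @Ordinal 6 3 isT); (@Ordinal 6 2 isT, @Ordinal 6 4 isT); (@Ordinal 6 2 isT, @Ordinal 6 5 isT)]);
 (0,10,[:: (@Ordinal 6 2 isT, @Ordinal 6 3 isT); (@Ordinal 6 3 isT, @Ordinal 6 2 isT); (@Ordinal 6 3 isT, @Ordinal 6 1 isT)]);
 (0,11,[:: (@Ordinal 6 2 isT, @Ordinal 6 3 isT); (@Ordinal 6 3 isT, @Ordinal 6 2 isT); (@Ordinal 6 3 isT, @Ordinal 6 3 isT)]);
 (1,2,[:: (@Ordinal 6 2 isT, @Ordinal 6 2 isT); (@Ordinal 6 2 isT, @Ordinal 6 3 isT)]);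
 (1,3,[:: (@Ordinal 6 1 isT, @Ordinal 6 2 isT)]);
 (1,4,[:: (@Ordinal 6 2 isT, @Ordinal 6 0 isT)]);
 (1,5,[:: (@Ordinal 6 2 isT, @Ordinal 6 2 isT); (@Ordinal 6 2 isT, @Ordinal 6 3 isT); (@Ordinal 6 2 isT, @Ordinal 6 4 isT)]);
 (1,6,[:: (@Ordinal 6 2 isT, @Ordinal 6 2 isT); (@Ordinal 6 2 isT, @Ordinal 6 3 isT); (@Ordinal 6 3 isT, @Ordinal 6 2 isT)]);
 (1,7,[:: (@Ordinal 6 1 isT, @Ordinal 6 2 isT); (@Ordinal 6 1 isT, @Ordinal 6 1 isT)]);
 (1,8,[:: (@Ordinal 6 1 isT, @Ordinal 6 2 isT); (@Ordinal 6 1 isT, @Ordinal 6 3 isT)]);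
 (1,9,[:: (@Ordinal 6 2 isT, @Ordinal 6 2 isT); (@Ordinal 6 2 isT, @Ordinal 6 3 isT); (@Ordinal 6 2 isT, @Ordinal 6 4 isT); (@Ordinal 6 2 isT, @Ordinal 6 5 isT)]);
 (1,10,[:: (@Ordinal 6 2 isT, @Ordinal 6 2 isT); (@Ordinal 6 2 isT, @Ordinal 6 3 isT); (@Ordinal 6 3 isT, @Ordinal 6 2 isT); (@Ordinal 6 3 isT, @Ordinal 6 1 isT)]);
 (1,11,[:: (@Ordinal 6 2 isT, @Ordinal 6 2 isT); (@Ordinal 6 2 isT, @Ordinal 6 3 isT); (@Ordinal 6 3 isT, @Ordinal 6 2 isT); (@Ordinal 6 3 isT, @Ordinal 6 3 isT)]);
 (2,3,[:: (@Ordinal 6 2 isT, @Ordinal 6 2 isT); (@Ordinal 6 2 isT, @Ordinal 6 1 isT); (@Ordinal 6 1 isT, @Ordinal 6 2 isT)]);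
 (2,4,[:: (@Ordinal 6 2 isT, @Ordinal 6 2 isT); (@Ordinal 6 2 isT, @Ordinal 6 1 isT); (@Ordinal 6 2 isT, @Ordinal 6 0 isT)]);
 (2,5,[:: (@Ordinal 6 2 isT, @Ordinal 6 4 isT)]);
 (2,6,[:: (@Ordinal 6 3 isT, @Ordinal 6 2 isT)]);
 (2,7,[:: (@Ordinal 6 2 isT, @Ordinal 6 2 isT); (@Ordinal 6 2 isT, @Ordinal 6 1 isT); (@Ordinal 6 1 isT, @Ordinal 6 2 isT); (@Ordinal 6 1 isT, @Ordinal 6 1 isT)]);
 (2,8,[:: (@Ordinal 6 2 isT, @Ordinal 6 2 isT); (@Ordinal 6 2 isT, @Ordinal 6 1 isT); (@Ordinal 6 1 isT, @Ordinal 6 2 isT); (@Ordinal 6 1 isT, @Ordinal 6 3 isT)]);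
 (2,9,[:: (@Ordinal 6 2 isT, @Ordinal 6 4 isT); (@Ordinal 6 2 isT, @Ordinal 6 5 isT)]);
 (2,10,[:: (@Ordinal 6 3 isT, @Ordinal 6 2 isT); (@Ordinal 6 3 isT, @Ordinal 6 1 isT)]);
 (2,11,[:: (@Ordinal 6 3 isT, @Ordinal 6 2 isT); (@Ordinal 6 3 isT, @Ordinal 6 3 isT)]);
 (3,4,[:: (@Ordinal 6 2 isT, @Ordinal 6 1 isT); (@Ordinal 6 2 isT, @Ordinal 6 0 isT)]);
 (3,5,[:: (@Ordinal 6 2 isT, @Ordinal 6 1 isT); (@Ordinal 6 2 isT, @Ordinal 6 2 isT); (@Ordinal 6 2 isT, @Ordinal 6 3 isT); (@Ordinal 6 2 isT, @Ordinal 6 4 isT)]);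
 (3,6,[:: (@Ordinal 6 2 isT, @Ordinal 6 1 isT); (@Ordinal 6 2 isT, @Ordinal 6 2 isT); (@Ordinal 6 2 isT, @Ordinal 6 3 isT); (@Ordinal 6 3 isT, @Ordinal 6 2 isT)]);
 (3,7,[:: (@Ordinal 6 1 isT, @Ordinal 6 1 isT)]);
 (3,8,[:: (@Ordinal 6 1 isT, @Ordinal 6 3 isT)]);
 (4,5,[:: (@Ordinal 6 2 isT, @Ordinal 6 1 isT); (@Ordinal 6 2 isT, @Ordinal 6 2 isT); (@Ordinal 6 2 isT, @Ordinal 6 3 isT); (@Ordinal 6 2 isT, @Ordinal 6 4 isT)]);
 (4,6,[:: (@Ordinal 6 2 isT, @Ordinal 6 1 isT); (@Ordinal 6 2 isT, @Ordinal 6 2 isT); (@Ordinal 6 2 isT, @Ordinal 6 3 isT); (@Ordinal 6 3 isT, @Ordinal 6 2 isT)]);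
 (4,7,[:: (@Ordinal 6 2 isT, @Ordinal 6 1 isT); (@Ordinal 6 1 isT, @Ordinal 6 2 isT); (@Ordinal 6 1 isT, @Ordinal 6 1 isT)]);
 (4,8,[:: (@Ordinal 6 2 isT, @Ordinal 6 1 isT); (@Ordinal 6 1 isT, @Ordinal 6 2 isT); (@Ordinal 6 1 isT, @Ordinal 6 3 isT)]);
 (5,6,[:: (@Ordinal 6 2 isT, @Ordinal 6 3 isT); (@Ordinal 6 3 isT, @Ordinal 6 2 isT)]);
 (5,9,[:: (@Ordinal 6 2 isT, @Ordinal 6 5 isT)]);
 (5,10,[:: (@Ordinal 6 2 isT, @Ordinal 6 3 isT); (@Ordinal 6 3 isT, @Ordinal 6 2 isT); (@Ordinal 6 3 isT, @Ordinal 6 1 isT)]);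
 (5,11,[:: (@Ordinal 6 2 isT, @Ordinal 6 3 isT); (@Ordinal 6 3 isT, @Ordinal 6 2 isT); (@Ordinal 6 3 isT, @Ordinal 6 3 isT)]);
 (6,9,[:: (@Ordinal 6 2 isT, @Ordinal 6 3 isT); (@Ordinal 6 2 isT, @Ordinal 6 4 isT); (@Ordinal 6 2 isT, @Ordinal 6 5 isT)]);
 (6,10,[:: (@Ordinal 6 3 isT, @Ordinal 6 1 isT)]);
 (6,11,[:: (@Ordinal 6 3 isT, @Ordinal 6 3 isT)]);
 (7,8,[:: (@Ordinal 6 1 isT, @Ordinal 6 2 isT); (@Ordinal 6 1 isT, @Ordinal 6 3 isT)]);
 (9,10,[:: (@Ordinal 6 2 isT, @Ordinal 6 4 isT); (@Ordinal 6 2 isT, @Ordinal 6 3 isT); (@Ordinal 6 3 isT, @Ordinal 6 2 isT); (@Ordinal 6 3 isT, @Ordinal 6 1 isT)]);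
 (9,11,[:: (@Ordinal 6 2 isT, @Ordinal 6 4 isT); (@Ordinal 6 2 isT, @Ordinal 6 3 isT); (@Ordinal 6 3 isT, @Ordinal 6 2 isT); (@Ordinal 6 3 isT, @Ordinal 6 3 isT)]);
 (10,11,[:: (@Ordinal 6 3 isT, @Ordinal 6 2 isT); (@Ordinal 6 3 isT, @Ordinal 6 3 isT)])].
Definition W2 : seq ('I_8 * 'I_8) := [:: (@Ordinal 8 3 isT, @Ordinal 8 3 isT); (@Ordinal 8 4 isT, @Ordinal 8 4 isT); (@Ordinal 8 3 isT, @Ordinal 8 2 isT); (@Ordinal 8 3 isT, @Ordinal 8 4 isT); (@Ordinal 8 4 isT, @Ordinal 8 3 isT); (@Ordinal 8 4 isT, @Ordinal 8 5 isT); (@Ordinal 8 2 isT, @Ordinal 8 3 isT); (@Ordinal 8 3 isT, @Ordinal 8 1 isT); (@Ordinal 8 3 isT, @Ordinal 8 5 isT); (@Ordinal 8 4 isT, @Ordinal 8 2 isT); (@Ordinal 8 4 isT, @Ordinal 8 6 isT); (@Ordinal 8 5 isT, @Ordinal 8 4 isT); (@Ordinal 8 2 isT, @Ordinal 8 2 isT); (@Ordinal 8 2 isT, @Ordinal 8 4 isT); (@Ordinal 8 3 isT, @Ordinal 8 0 isT); (@Ordinal 8 3 isT, @Ordinal 8 6 isT); (@Ordinal 8 4 isT, @Ordinal 8 1 isT); (@Ordinal 8 4 isT, @Ordinal 8 7 isT); (@Ordinal 8 5 isT, @Ordinal 8 3 isT); (@Ordinal 8 5 isT, @Ordinal 8 5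 isT); (@Ordinal 8 2 isT, @Ordinal 8 1 isT); (@Ordinal 8 2 isT, @Ordinal 8 5 isT); (@Ordinal 8 3 isT, @Ordinal 8 7 isT); (@Ordinal 8 4 isT, @Ordinal 8 0 isT); (@Ordinal 8 5 isT, @Ordinal 8 2 isT); (@Ordinal 8 5 isT, @Ordinal 8 6 isT)].
Definition T2 : seq (nat*nat*seq ('I_8 * 'I_8)) := [:: (0,1,[:: (@Ordinal 8 3 isT, @Ordinal 8 4 isT); (@Ordinal 8 4 isT, @Ordinal 8 3 isT); (@Ordinal 8 4 isT, @Ordinal 8 4 isT)]);
 (0,2,[:: (@Ordinal 8 3 isT, @Ordinal 8 2 isT)]);
 (0,3,[:: (@Ordinal 8 3 isT, @Ordinal 8 4 isT)]);
 (0,4,[:: (@Ordinal 8 3 isT, @Ordinal 8 4 isT); (@Ordinal 8 4 isT, @Ordinal 8 3 isT)]);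
 (0,5,[:: (@Ordinal 8 3 isT, @Ordinal 8 4 isT); (@Ordinal 8 4 isT, @Ordinal 8 3 isT); (@Ordinal 8 4 isT, @Ordinal 8 4 isT); (@Ordinal 8 4 isT, @Ordinal 8 5 isT)]);
 (0,6,[:: (@Ordinal 8 3 isT, @Ordinal 8 2 isT); (@Ordinal 8 2 isT, @Ordinal 8 3 isT)]);
 (0,7,[:: (@Ordinal 8 3 isT, @Ordinal 8 2 isT); (@Ordinal 8 3 isT, @Ordinal 8 1 isT)]);
 (0,8,[:: (@Ordinal 8 3 isT, @Ordinal 8 4 isT); (@Ordinal 8 3 isT, @Ordinal 8 5 isT)]);
 (0,9,[:: (@Ordinal 8 3 isT, @Ordinal 8 4 isT); (@Ordinal 8 4 isT, @Ordinal 8 3 isT); (@Ordinal 8 4 isT, @Ordinal 8 2 isT)]);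
 (0,12,[:: (@Ordinal 8 3 isT, @Ordinal 8 2 isT); (@Ordinal 8 2 isT, @Ordinal 8 3 isT); (@Ordinal 8 2 isT, @Ordinal 8 2 isT)]);
 (0,13,[:: (@Ordinal 8 3 isT, @Ordinal 8 2 isT); (@Ordinal 8 2 isT, @Ordinal 8 3 isT); (@Ordinal 8 2 isT, @Ordinal 8 4 isT)]);
 (0,14,[:: (@Ordinal 8 3 isT, @Ordinal 8 2 isT); (@Ordinal 8 3 isT, @Ordinal 8 1 isT); (@Ordinal 8 3 isT, @Ordinal 8 0 isT)]);
 (0,15,[:: (@Ordinal 8 3 isT, @Ordinal 8 4 isT); (@Ordinal 8 3 isT, @Ordinal 8 5 isT); (@Ordinal 8 3 isT, @Ordinal 8 6 isT)]);
 (0,16,[:: (@Ordinal 8 3 isT, @Ordinal 8 4 isT); (@Ordinal 8 4 isT, @Ordinal 8 3 isT); (@Ordinal 8 4 isT, @Ordinal 8 2 isT); (@Ordinal 8 4 isT, @Ordinal 8 1 isT)]);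
 (0,20,[:: (@Ordinal 8 3 isT, @Ordinal 8 2 isT); (@Ordinal 8 2 isT, @Ordinal 8 3 isT); (@Ordinal 8 2 isT, @Ordinal 8 2 isT); (@Ordinal 8 2 isT, @Ordinal 8 1 isT)]);
 (0,21,[:: (@Ordinal 8 3 isT, @Ordinal 8 2 isT); (@Ordinal 8 2 isT, @Ordinal 8 3 isT); (@Ordinal 8 2 isT, @Ordinal 8 4 isT); (@Ordinal 8 2 isT, @Ordinal 8 5 isT)]);
 (0,22,[:: (@Ordinal 8 3 isT, @Ordinal 8 4 isT); (@Ordinal 8 3 isT, @Ordinal 8 5 isT); (@Ordinal 8 3 isT, @Ordinal 8 6 isT); (@Ordinal 8 3 isT, @Ordinal 8 7 isT)]);
 (1,2,[:: (@Ordinal 8 4 isT, @Ordinal 8 3 isT); (@Ordinal 8 3 isT, @Ordinal 8 4 isT); (@Ordinal 8 3 isT, @Ordinal 8 3 isT); (@Ordinal 8 3 isT, @Ordinal 8 2 isT)]);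
 (1,3,[:: (@Ordinal 8 4 isT, @Ordinal 8 3 isT); (@Ordinal 8 3 isT, @Ordinal 8 4 isT)]);
 (1,4,[:: (@Ordinal 8 4 isT, @Ordinal 8 3 isT)]);
 (1,5,[:: (@Ordinal 8 4 isT, @Ordinal 8 5 isT)]);
 (1,8,[:: (@Ordinal 8 4 isT, @Ordinal 8 3 isT); (@Ordinal 8 3 isT, @Ordinal 8 4 isT); (@Ordinal 8 3 isT, @Ordinal 8 5 isT)]);
 (1,9,[:: (@Ordinal 8 4 isT, @Ordinal 8 3 isT); (@Ordinal 8 4 isT, @Ordinal 8 2 isT)]);
 (1,10,[:: (@Ordinal 8 4 isT, @Ordinal 8 5 isT); (@Ordinal 8 4 isT, @Ordinal 8 6 isT)]);
 (1,11,[:: (@Ordinal 8 4 isT, @Ordinal 8 5 isT); (@Ordinal 8 5 isT, @Ordinal 8 4 isT)]);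
 (1,15,[:: (@Ordinal 8 4 isT, @Ordinal 8 3 isT); (@Ordinal 8 3 isT, @Ordinal 8 4 isT); (@Ordinal 8 3 isT, @Ordinal 8 5 isT); (@Ordinal 8 3 isT, @Ordinal 8 6 isT)]);
 (1,16,[:: (@Ordinal 8 4 isT, @Ordinal 8 3 isT); (@Ordinal 8 4 isT, @Ordinal 8 2 isT); (@Ordinal 8 4 isT, @Ordinal 8 1 isT)]);
 (1,17,[:: (@Ordinal 8 4 isT, @Ordinal 8 5 isT); (@Ordinal 8 4 isT, @Ordinal 8 6 isT); (@Ordinal 8 4 isT, @Ordinal 8 7 isT)]);
 (1,18,[:: (@Ordinal 8 4 isT, @Ordinal 8 5 isT); (@Ordinal 8 5 isT, @Ordinal 8 4 isT); (@Ordinal 8 5 isT, @Ordinal 8 3 isT)]);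
 (1,19,[:: (@Ordinal 8 4 isT, @Ordinal 8 5 isT); (@Ordinal 8 5 isT, @Ordinal 8 4 isT); (@Ordinal 8 5 isT, @Ordinal 8 5 isT)]);
 (1,23,[:: (@Ordinal 8 4 isT, @Ordinal 8 3 isT); (@Ordinal 8 4 isT, @Ordinal 8 2 isT); (@Ordinal 8 4 isT, @Ordinal 8 1 isT); (@Ordinal 8 4 isT, @Ordinal 8 0 isT)]);
 (1,24,[:: (@Ordinal 8 4 isT, @Ordinal 8 5 isT); (@Ordinal 8 5 isT, @Ordinal 8 4 isT); (@Ordinal 8 5 isT, @Ordinal 8 3 isT); (@Ordinal 8 5 isT, @Ordinal 8 2 isT)]);
 (1,25,[:: (@Ordinal 8 4 isT, @Ordinal 8 5 isT); (@Ordinal 8 5 isT, @Ordinal 8 4 isT); (@Ordinal 8 5 isT, @Ordinal 8 5 isT); (@Ordinal 8 5 isT, @Ordinal 8 6 isT)]);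
 (2,3,[:: (@Ordinal 8 3 isT, @Ordinal 8 3 isT); (@Ordinal 8 3 isT, @Ordinal 8 4 isT)]);
 (2,4,[:: (@Ordinal 8 3 isT, @Ordinal 8 3 isT); (@Ordinal 8 3 isT, @Ordinal 8 4 isT); (@Ordinal 8 4 isT, @Ordinal 8 3 isT)]);
 (2,6,[:: (@Ordinal 8 2 isT, @Ordinal 8 3 isT)]);
 (2,7,[:: (@Ordinal 8 3 isT, @Ordinal 8 1 isT)]);
 (2,8,[:: (@Ordinal 8 3 isT, @Ordinal 8 3 isT); (@Ordinal 8 3 isT, @Ordinal 8 4 isT); (@Ordinal 8 3 isT, @Ordinal 8 5 isT)]);
 (2,9,[:: (@Ordinal 8 3 isT, @Ordinal 8 3 isT); (@Ordinal 8 3 isT, @Ordinal 8 4 isT); (@Ordinal 8 4 isT, @Ordinal 8 3 isT); (@Ordinal 8 4 isT, @Ordinal 8 2 isT)]);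
 (2,12,[:: (@Ordinal 8 2 isT, @Ordinal 8 3 isT); (@Ordinal 8 2 isT, @Ordinal 8 2 isT)]);
 (2,13,[:: (@Ordinal 8 2 isT, @Ordinal 8 3 isT); (@Ordinal 8 2 isT, @Ordinal 8 4 isT)]);
 (2,14,[:: (@Ordinal 8 3 isT, @Ordinal 8 1 isT); (@Ordinal 8 3 isT, @Ordinal 8 0 isT)]);
 (2,15,[:: (@Ordinal 8 3 isT, @Ordinal 8 3 isT); (@Ordinal 8 3 isT, @Ordinal 8 4 isT); (@Ordinal 8 3 isT, @Ordinal 8 5 isT); (@Ordinal 8 3 isT, @Ordinal 8 6 isT)]);
 (2,20,[:: (@Ordinal 8 2 isT, @Ordinal 8 3 isT); (@Ordinal 8 2 isT, @Ordinal 8 2 isT); (@Ordinal 8 2 isT, @Ordinal 8 1 isT)]);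
 (2,21,[:: (@Ordinal 8 2 isT, @Ordinal 8 3 isT); (@Ordinal 8 2 isT, @Ordinal 8 4 isT); (@Ordinal 8 2 isT, @Ordinal 8 5 isT)]);
 (3,4,[:: (@Ordinal 8 4 isT, @Ordinal 8 3 isT)]);
 (3,5,[:: (@Ordinal 8 4 isT, @Ordinal 8 3 isT); (@Ordinal 8 4 isT, @Ordinal 8 4 isT); (@Ordinal 8 4 isT, @Ordinal 8 5 isT)]);
 (3,6,[:: (@Ordinal 8 3 isT, @Ordinal 8 3 isT); (@Ordinal 8 3 isT, @Ordinal 8 2 isT); (@Ordinal 8 2 isT, @Ordinal 8 3 isT)]);
 (3,7,[:: (@Ordinal 8 3 isT, @Ordinal 8 3 isT); (@Ordinal 8 3 isT, @Ordinal 8 2 isT); (@Ordinal 8 3 isT, @Ordinal 8 1 isT)]);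
 (3,8,[:: (@Ordinal 8 3 isT, @Ordinal 8 5 isT)]);
 (3,9,[:: (@Ordinal 8 4 isT, @Ordinal 8 3 isT); (@Ordinal 8 4 isT, @Ordinal 8 2 isT)]);
 (3,10,[:: (@Ordinal 8 4 isT, @Ordinal 8 3 isT); (@Ordinal 8 4 isT, @Ordinal 8 4 isT); (@Ordinal 8 4 isT, @Ordinal 8 5 isT); (@Ordinal 8 4 isT, @Ordinal 8 6 isT)]);
 (3,11,[:: (@Ordinal 8 4 isT, @Ordinal 8 3 isT); (@Ordinal 8 4 isT, @Ordinal 8 4 isT); (@Ordinal 8 4 isT, @Ordinal 8 5 isT); (@Ordinal 8 5 isT, @Ordinal 8 4 isT)]);
 (3,12,[:: (@Ordinal 8 3 isT, @Ordinal 8 3 isT); (@Ordinal 8 3 isT, @Ordinal 8 2 isT); (@Ordinal 8 2 isT, @Ordinal 8 3 isT); (@Ordinal 8 2 isT, @Ordinal 8 2 isT)]);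
 (3,13,[:: (@Ordinal 8 3 isT, @Ordinal 8 3 isT); (@Ordinal 8 3 isT, @Ordinal 8 2 isT); (@Ordinal 8 2 isT, @Ordinal 8 3 isT); (@Ordinal 8 2 isT, @Ordinal 8 4 isT)]);
 (3,14,[:: (@Ordinal 8 3 isT, @Ordinal 8 3 isT); (@Ordinal 8 3 isT, @Ordinal 8 2 isT); (@Ordinal 8 3 isT, @Ordinal 8 1 isT); (@Ordinal 8 3 isT, @Ordinal 8 0 isT)]);
 (3,15,[:: (@Ordinal 8 3 isT, @Ordinal 8 5 isT); (@Ordinal 8 3 isT, @Ordinal 8 6 isT)]);
 (3,16,[:: (@Ordinal 8 4 isT, @Ordinal 8 3 isT); (@Ordinal 8 4 isT, @Ordinal 8 2 isT); (@Ordinal 8 4 isT, @Ordinal 8 1 isT)]);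
 (3,22,[:: (@Ordinal 8 3 isT, @Ordinal 8 5 isT); (@Ordinal 8 3 isT, @Ordinal 8 6 isT); (@Ordinal 8 3 isT, @Ordinal 8 7 isT)]);
 (3,23,[:: (@Ordinal 8 4 isT, @Ordinal 8 3 isT); (@Ordinal 8 4 isT, @Ordinal 8 2 isT); (@Ordinal 8 4 isT, @Ordinal 8 1 isT); (@Ordinal 8 4 isT, @Ordinal 8 0 isT)]);
 (4,5,[:: (@Ordinal 8 4 isT, @Ordinal 8 4 isT); (@Ordinal 8 4 isT, @Ordinal 8 5 isT)]);
 (4,6,[:: (@Ordinal 8 3 isT, @Ordinal 8 4 isT); (@Ordinal 8 3 isT, @Ordinal 8 3 isT); (@Ordinal 8 3 isT, @Ordinal 8 2 isT); (@Ordinal 8 2 isT, @Ordinal 8 3 isT)]);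
 (4,7,[:: (@Ordinal 8 3 isT, @Ordinal 8 4 isT); (@Ordinal 8 3 isT, @Ordinal 8 3 isT); (@Ordinal 8 3 isT, @Ordinal 8 2 isT); (@Ordinal 8 3 isT, @Ordinal 8 1 isT)]);
 (4,8,[:: (@Ordinal 8 3 isT, @Ordinal 8 4 isT); (@Ordinal 8 3 isT, @Ordinal 8 5 isT)]);
 (4,9,[:: (@Ordinal 8 4 isT, @Ordinal 8 2 isT)]);
 (4,10,[:: (@Ordinal 8 4 isT, @Ordinal 8 4 isT); (@Ordinal 8 4 isT, @Ordinal 8 5 isT); (@Ordinal 8 4 isT, @Ordinal 8 6 isT)]);
 (4,11,[:: (@Ordinal 8 4 isT, @Ordinal 8 4 isT); (@Ordinal 8 4 isT, @Ordinal 8 5 isT); (@Ordinal 8 5 isT, @Ordinal 8 4 isT)]);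
 (4,15,[:: (@Ordinal 8 3 isT, @Ordinal 8 4 isT); (@Ordinal 8 3 isT, @Ordinal 8 5 isT); (@Ordinal 8 3 isT, @Ordinal 8 6 isT)]);
 (4,16,[:: (@Ordinal 8 4 isT, @Ordinal 8 2 isT); (@Ordinal 8 4 isT, @Ordinal 8 1 isT)]);
 (4,17,[:: (@Ordinal 8 4 isT, @Ordinal 8 4 isT); (@Ordinal 8 4 isT, @Ordinal 8 5 isT); (@Ordinal 8 4 isT, @Ordinal 8 6 isT); (@Ordinal 8 4 isT, @Ordinal 8 7 isT)]);
 (4,18,[:: (@Ordinal 8 4 isT, @Ordinal 8 4 isT); (@Ordinal 8 4 isT, @Ordinal 8 5 isT); (@Ordinal 8 5 isT, @Ordinal 8 4 isT); (@Ordinal 8 5 isT, @Ordinal 8 3 isT)]);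
 (4,19,[:: (@Ordinal 8 4 isT, @Ordinal 8 4 isT); (@Ordinal 8 4 isT, @Ordinal 8 5 isT); (@Ordinal 8 5 isT, @Ordinal 8 4 isT); (@Ordinal 8 5 isT, @Ordinal 8 5 isT)]);
 (4,22,[:: (@Ordinal 8 3 isT, @Ordinal 8 4 isT); (@Ordinal 8 3 isT, @Ordinal 8 5 isT); (@Ordinal 8 3 isT, @Ordinal 8 6 isT); (@Ordinal 8 3 isT, @Ordinal 8 7 isT)]);
 (4,23,[:: (@Ordinal 8 4 isT, @Ordinal 8 2 isT); (@Ordinal 8 4 isT, @Ordinal 8 1 isT); (@Ordinal 8 4 isT, @Ordinal 8 0 isT)]);
 (5,8,[:: (@Ordinal 8 4 isT, @Ordinal 8 4 isT); (@Ordinal 8 4 isT, @Ordinal 8 3 isT); (@Ordinal 8 3 isT, @Ordinal 8 4 isT); (@Ordinal 8 3 isT, @Ordinal 8 5 isT)]);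
 (5,9,[:: (@Ordinal 8 4 isT, @Ordinal 8 4 isT); (@Ordinal 8 4 isT, @Ordinal 8 3 isT); (@Ordinal 8 4 isT, @Ordinal 8 2 isT)]);
 (5,10,[:: (@Ordinal 8 4 isT, @Ordinal 8 6 isT)]);
 (5,11,[:: (@Ordinal 8 5 isT, @Ordinal 8 4 isT)]);
 (5,16,[:: (@Ordinal 8 4 isT, @Ordinal 8 4 isT); (@Ordinal 8 4 isT, @Ordinal 8 3 isT); (@Ordinal 8 4 isT, @Ordinal 8 2 isT); (@Ordinal 8 4 isT, @Ordinal 8 1 isT)]);
 (5,17,[:: (@Ordinal 8 4 isT, @Ordinal 8 6 isT); (@Ordinal 8 4 isT, @Ordinal 8 7 isT)]);
 (5,18,[:: (@Ordinal 8 5 isT, @Ordinal 8 4 isT); (@Ordinal 8 5 isT, @Ordinal 8 3 isT)]);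
 (5,19,[:: (@Ordinal 8 5 isT, @Ordinal 8 4 isT); (@Ordinal 8 5 isT, @Ordinal 8 5 isT)]);
 (5,24,[:: (@Ordinal 8 5 isT, @Ordinal 8 4 isT); (@Ordinal 8 5 isT, @Ordinal 8 3 isT); (@Ordinal 8 5 isT, @Ordinal 8 2 isT)]);
 (5,25,[:: (@Ordinal 8 5 isT, @Ordinal 8 4 isT); (@Ordinal 8 5 isT, @Ordinal 8 5 isT); (@Ordinal 8 5 isT, @Ordinal 8 6 isT)]);
 (6,7,[:: (@Ordinal 8 3 isT, @Ordinal 8 2 isT); (@Ordinal 8 3 isT, @Ordinal 8 1 isT)]);
 (6,8,[:: (@Ordinal 8 3 isT, @Ordinal 8 2 isT); (@Ordinal 8 3 isT, @Ordinal 8 3 isT); (@Ordinal 8 3 isT, @Ordinal 8 4 isT); (@Ordinal 8 3 isT, @Ordinal 8 5 isT)]);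
 (6,12,[:: (@Ordinal 8 2 isT, @Ordinal 8 2 isT)]);
 (6,13,[:: (@Ordinal 8 2 isT, @Ordinal 8 4 isT)]);
 (6,14,[:: (@Ordinal 8 3 isT, @Ordinal 8 2 isT); (@Ordinal 8 3 isT, @Ordinal 8 1 isT); (@Ordinal 8 3 isT, @Ordinal 8 0 isT)]);
 (6,20,[:: (@Ordinal 8 2 isT, @Ordinal 8 2 isT); (@Ordinal 8 2 isT, @Ordinal 8 1 isT)]);
 (6,21,[:: (@Ordinal 8 2 isT, @Ordinal 8 4 isT); (@Ordinal 8 2 isT, @Ordinal 8 5 isT)]);
 (7,8,[:: (@Ordinal 8 3 isT, @Ordinal 8 2 isT); (@Ordinal 8 3 isT, @Ordinal 8 3 isT); (@Ordinal 8 3 isT, @Ordinal 8 4 isT); (@Ordinal 8 3 isT, @Ordinal 8 5 isT)]);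
 (7,12,[:: (@Ordinal 8 3 isT, @Ordinal 8 2 isT); (@Ordinal 8 2 isT, @Ordinal 8 3 isT); (@Ordinal 8 2 isT, @Ordinal 8 2 isT)]);
 (7,13,[:: (@Ordinal 8 3 isT, @Ordinal 8 2 isT); (@Ordinal 8 2 isT, @Ordinal 8 3 isT); (@Ordinal 8 2 isT, @Ordinal 8 4 isT)]);
 (7,14,[:: (@Ordinal 8 3 isT, @Ordinal 8 0 isT)]);
 (7,20,[:: (@Ordinal 8 3 isT, @Ordinal 8 2 isT); (@Ordinal 8 2 isT, @Ordinal 8 3 isT); (@Ordinal 8 2 isT, @Ordinal 8 2 isT); (@Ordinal 8 2 isT, @Ordinal 8 1 isT)]);
 (7,21,[:: (@Ordinal 8 3 isT, @Ordinal 8 2 isT); (@Ordinal 8 2 isT, @Ordinal 8 3 isT); (@Ordinal 8 2 isT, @Ordinal 8 4 isT); (@Ordinal 8 2 isT, @Ordinal 8 5 isT)]);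
 (8,9,[:: (@Ordinal 8 3 isT, @Ordinal 8 4 isT); (@Ordinal 8 4 isT, @Ordinal 8 3 isT); (@Ordinal 8 4 isT, @Ordinal 8 2 isT)]);
 (8,15,[:: (@Ordinal 8 3 isT, @Ordinal 8 6 isT)]);
 (8,16,[:: (@Ordinal 8 3 isT, @Ordinal 8 4 isT); (@Ordinal 8 4 isT, @Ordinal 8 3 isT); (@Ordinal 8 4 isT, @Ordinal 8 2 isT); (@Ordinal 8 4 isT, @Ordinal 8 1 isT)]);
 (8,22,[:: (@Ordinal 8 3 isT, @Ordinal 8 6 isT); (@Ordinal 8 3 isT, @Ordinal 8 7 isT)]);
 (9,10,[:: (@Ordinal 8 4 isT, @Ordinal 8 3 isT); (@Ordinal 8 4 isT, @Ordinal 8 4 isT); (@Ordinal 8 4 isT, @Ordinal 8 5 isT); (@Ordinal 8 4 isT, @Ordinal 8 6 isT)]);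
 (9,11,[:: (@Ordinal 8 4 isT, @Ordinal 8 3 isT); (@Ordinal 8 4 isT, @Ordinal 8 4 isT); (@Ordinal 8 4 isT, @Ordinal 8 5 isT); (@Ordinal 8 5 isT, @Ordinal 8 4 isT)]);
 (9,15,[:: (@Ordinal 8 4 isT, @Ordinal 8 3 isT); (@Ordinal 8 3 isT, @Ordinal 8 4 isT); (@Ordinal 8 3 isT, @Ordinal 8 5 isT); (@Ordinal 8 3 isT, @Ordinal 8 6 isT)]);
 (9,16,[:: (@Ordinal 8 4 isT, @Ordinal 8 1 isT)]);
 (9,23,[:: (@Ordinal 8 4 isT, @Ordinal 8 1 isT); (@Ordinal 8 4 isT, @Ordinal 8 0 isT)]);
 (10,11,[:: (@Ordinal 8 4 isT, @Ordinal 8 5 isT); (@Ordinal 8 5 isT, @Ordinal 8 4 isT)]);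
 (10,17,[:: (@Ordinal 8 4 isT, @Ordinal 8 7 isT)]);
 (10,18,[:: (@Ordinal 8 4 isT, @Ordinal 8 5 isT); (@Ordinal 8 5 isT, @Ordinal 8 4 isT); (@Ordinal 8 5 isT, @Ordinal 8 3 isT)]);
 (10,19,[:: (@Ordinal 8 4 isT, @Ordinal 8 5 isT); (@Ordinal 8 5 isT, @Ordinal 8 4 isT); (@Ordinal 8 5 isT, @Ordinal 8 5 isT)]);
 (10,24,[:: (@Ordinal 8 4 isT, @Ordinal 8 5 isT); (@Ordinal 8 5 isT, @Ordinal 8 4 isT); (@Ordinal 8 5 isT, @Ordinal 8 3 isT); (@Ordinal 8 5 isT, @Ordinal 8 2 isT)]);
 (10,25,[:: (@Ordinal 8 4 isT, @Ordinal 8 5 isT); (@Ordinal 8 5 isT, @Ordinal 8 4 isT); (@Ordinal 8 5 isT, @Ordinal 8 5 isT); (@Ordinal 8 5 isT, @Ordinal 8 6 isT)]);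
 (11,17,[:: (@Ordinal 8 4 isT, @Ordinal 8 5 isT); (@Ordinal 8 4 isT, @Ordinal 8 6 isT); (@Ordinal 8 4 isT, @Ordinal 8 7 isT)]);
 (11,18,[:: (@Ordinal 8 5 isT, @Ordinal 8 3 isT)]);
 (11,19,[:: (@Ordinal 8 5 isT, @Ordinal 8 5 isT)]);
 (11,24,[:: (@Ordinal 8 5 isT, @Ordinal 8 3 isT); (@Ordinal 8 5 isT, @Ordinal 8 2 isT)]);
 (11,25,[:: (@Ordinal 8 5 isT, @Ordinal 8 5 isT); (@Ordinal 8 5 isT, @Ordinal 8 6 isT)]);
 (12,13,[:: (@Ordinal 8 2 isT, @Ordinal 8 3 isT); (@Ordinal 8 2 isT, @Ordinal 8 4 isT)]);
 (12,14,[:: (@Ordinal 8 2 isT, @Ordinal 8 3 isT); (@Ordinal 8 3 isT, @Ordinal 8 2 isT); (@Ordinal 8 3 isT, @Ordinal 8 1 isT); (@Ordinal 8 3 isT, @Ordinal 8 0 isT)]);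
 (12,20,[:: (@Ordinal 8 2 isT, @Ordinal 8 1 isT)]);
 (12,21,[:: (@Ordinal 8 2 isT, @Ordinal 8 3 isT); (@Ordinal 8 2 isT, @Ordinal 8 4 isT); (@Ordinal 8 2 isT, @Ordinal 8 5 isT)]);
 (13,14,[:: (@Ordinal 8 2 isT, @Ordinal 8 3 isT); (@Ordinal 8 3 isT, @Ordinal 8 2 isT); (@Ordinal 8 3 isT, @Ordinal 8 1 isT); (@Ordinal 8 3 isT, @Ordinal 8 0 isT)]);
 (13,20,[:: (@Ordinal 8 2 isT, @Ordinal 8 3 isT); (@Ordinal 8 2 isT, @Ordinal 8 2 isT); (@Ordinal 8 2 isT, @Ordinal 8 1 isT)]);
 (13,21,[:: (@Ordinal 8 2 isT, @Ordinal 8 5 isT)]);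
 (15,22,[:: (@Ordinal 8 3 isT, @Ordinal 8 7 isT)]);
 (16,23,[:: (@Ordinal 8 4 isT, @Ordinal 8 0 isT)]);
 (17,18,[:: (@Ordinal 8 4 isT, @Ordinal 8 6 isT); (@Ordinal 8 4 isT, @Ordinal 8 5 isT); (@Ordinal 8 5 isT, @Ordinal 8 4 isT); (@Ordinal 8 5 isT, @Ordinal 8 3 isT)]);
 (17,19,[:: (@Ordinal 8 4 isT, @Ordinal 8 6 isT); (@Ordinal 8 4 isT, @Ordinal 8 5 isT); (@Ordinal 8 5 isT, @Ordinal 8 4 isT); (@Ordinal 8 5 isT, @Ordinal 8 5 isT)]);
 (18,19,[:: (@Ordinal 8 5 isT, @Ordinal 8 4 isT); (@Ordinal 8 5 isT, @Ordinal 8 5 isT)]);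
 (18,24,[:: (@Ordinal 8 5 isT, @Ordinal 8 2 isT)]);
 (18,25,[:: (@Ordinal 8 5 isT, @Ordinal 8 4 isT); (@Ordinal 8 5 isT, @Ordinal 8 5 isT); (@Ordinal 8 5 isT, @Ordinal 8 6 isT)]);
 (19,24,[:: (@Ordinal 8 5 isT, @Ordinal 8 4 isT); (@Ordinal 8 5 isT, @Ordinal 8 3 isT); (@Ordinal 8 5 isT, @Ordinal 8 2 isT)]);
 (19,25,[:: (@Ordinal 8 5 isT, @Ordinal 8 6 isT)]);
 (20,21,[:: (@Ordinal 8 2 isT, @Ordinal 8 2 isT); (@Ordinal 8 2 isT, @Ordinal 8 3 isT); (@Ordinal 8 2 isT, @Ordinal 8 4 isT); (@Ordinal 8 2 isT, @Ordinal 8 5 isT)]);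
 (24,25,[:: (@Ordinal 8 5 isT, @Ordinal 8 3 isT); (@Ordinal 8 5 isT, @Ordinal 8 4 isT); (@Ordinal 8 5 isT, @Ordinal 8 5 isT); (@Ordinal 8 5 isT, @Ordinal 8 6 isT)])].

Theorem proposition6 :
  (forall f : 'I_6 * 'I_6 -> nat,
      packing_coloring (S2P 6) 4 f ->
      f (vtx 5 2 2) != 2 /\ f (vtx 5 2 2) != 3) /\
  (forall f' : 'I_8 * 'I_8 -> nat,
      packing_coloring (S2P 8) 4 f' ->
      ~ (f' (vtx 7 3 3) = 1 /\ f' (vtx 7 4 4) = 1)).
Proof.
split.
  move=> f Hp.
  have Hok : tab_ok (S2P 6) (@Ordinal 6 0 isT, @Ordinal 6 0 isT) W1 T1 by vm_compute.
  have Hs : srch (dtab T1) ([:: [:: 2; 3]] ++ nseq 11 [:: 1; 2; 3; 4]) [::] = false by vm_compute.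
  rewrite (@vtxE 5 2 2 isT isT).
  suff : f (@Ordinal 6 2 isT, @Ordinal 6 2 isT) \notin [:: 2; 3].
    by rewrite !inE negb_or => /andP.
  apply/negP => Hin.
  apply: (no_coloring Hp Hok _ Hs); apply: (@dom_ext _ (S2P 6) f); first exact: Hp.
  by case=> [|i] //= _.
move=> f Hp; rewrite (@vtxE 7 3 3 isT isT) (@vtxE 7 4 4 isT isT) => -[H1 H2].
have Hok : tab_ok (S2P 8) (@Ordinal 8 0 isT, @Ordinal 8 0 isT) W2 T2 by vm_compute.
have Hs : srch (dtab T2) ([:: [:: 1]; [:: 1]] ++ nseq 24 [:: 1; 2; 3; 4]) [::] = false by vm_compute.
apply: (no_coloring Hp Hok _ Hs); apply: (@dom_ext _ (S2P 8) f); first exact: Hp.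
case=> [|[|i]] Hi; last by rewrite ltnS ltnS ltn0 in Hi.
- by rewrite [nth _ _ 0]/= H1.
- by rewrite [nth _ _ 1]/= H2.
Qed.
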